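(* Let $d\geq 2$, energies $E_1\leq\dots\leq E_d$, inverse temperatures $\alpha>\beta\geq 0$, and $\gamma_k=e^{-\alpha E_k}/\sum_i e^{-\alpha E_i}$, $\Gamma_k=e^{-\beta E_k}/\sum_i e^{-\beta E_i}$. Define the probability vectors $\tilde{\boldsymbol{\gamma}}$ and $\tilde{\boldsymbol{\Gamma}}$ by $$\tilde{\gamma}_1=\frac{\Gamma_1(\gamma_1-\gamma_d)}{\Gamma_1(1-\gamma_d)-\Gamma_d(1-\gamma_1)},\quad \tilde{\gamma}_k=\frac{1-\tilde{\gamma}_1}{1-\gamma_1}\gamma_k\ (k\neq 1),$$ $$\tilde{\Gamma}_d=\frac{\Gamma_d(\gamma_1-\gamma_d)}{\Gamma_1(1-\gamma_d)-\Gamma_d(1-\gamma_1)},\quad \tilde{\Gamma}_k=\frac{1-\tilde{\Gamma}_d}{1-\Gamma_d}\Gamma_k\ (k\neq d).$$ Then $\tilde{\boldsymbol{\gamma}}\in F_{AB}$ and $\tilde{\boldsymbol{\Gamma}}\in F_{AB}$. Moreover, the convergence to these states with the number of strokes $N$ is exponential: there exist states in $F^{(N)}_{AB}$ whose distance to $\tilde{\boldsymbol{\gamma}}$ (respectively $\tilde{\boldsymbol{\Gamma}}$) decays exponentially in $N$.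
   Context: Incoherent states are probability vectors in $\mathbb{R}^d$. For a full-support probability vector $\mathbf{g}$, $\mathbf{p}\succ_{\mathbf{g}}\mathbf{q}$ (thermomajorisation) means: ordering indices by a permutation $\pi$ with $p_{\pi_i}/g_{\pi_i}$ non-increasing in $i$, the piecewise linear curve through $\left(\sum_{i\leq j}g_{\pi_i},\sum_{i\leq j}p_{\pi_i}\right)$, $j=0,\dots,d$, is nowhere below the analogous curve of $\mathbf{q}$. For $N\geq 1$, $F^{(N)}_{AB}$ (states achievable after $N$ strokes) is the set of convex combinations of vectors $\mathbf{p}^{(N-1)}$ obtainable by a chain $\boldsymbol{\gamma}=\mathbf{p}^{(0)}\succ_{\boldsymbol{\Gamma}}\mathbf{p}^{(1)}\succ_{\boldsymbol{\gamma}}\mathbf{p}^{(2)}\succ_{\boldsymbol{\Gamma}}\cdots\mathbf{p}^{(N-1)}$ or by a chain $\boldsymbol{\Gamma}=\mathbf{p}^{(0)}\succ_{\boldsymbol{\gamma}}\mathbf{p}^{(1)}\succ_{\boldsymbol{\Gamma}}\cdots\mathbf{p}^{(N-1)}$. $F_{AB}$ is the set of states achievable as $N\to\infty$, i.e., the closure of $\bigcup_N F^{(N)}_{AB}$. *)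

(* Defs.v *)
From mathcomp Require Import all_boot all_order perm all_algebra.
From mathcomp Require Import reals sequences exp.
Set Implicit Arguments. Unset Strict Implicit. Unset Printing Implicit Defensive.
Import Order.TTheory GRing.Theory Num.Theory.
Local Open Scope ring_scope.

Section Defs.
Variables (R : realType) (d : nat).

Definition vec := 'I_d -> R.

Definition prob_vec (p : vec) : Prop :=
  (forall i, 0 <= p i) /\ \sum_i p i = 1.

Definition thermo_sorted (g p : vec) (pi : {perm 'I_d}) : Prop :=
  forall i j : 'I_d, (i <= j)%N -> p (pi j) / g (pi j) <= p (pi i) / g (pi i).

Definition clamp01 (t : R) : R := Num.min 1 (Num.max 0 t).

(* The piecewise linear curve through the points
   (sum_{i<=j} g_{pi_i}, sum_{i<=j} p_{pi_i}), j = 0..d, evaluated at x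
   in [0, sum_i g_i]: on the j-th segment its slope is p_{pi_j}/g_{pi_j}. *)
Definition thermo_curve (g p : vec) (pi : {perm 'I_d}) (x : R) : R :=
  \sum_(j < d) p (pi j) *
     clamp01 ((x - \sum_(i < d | (i < j)%N) g (pi i)) / g (pi j)).

Definition thermomaj (g p q : vec) : Prop :=
  exists pip piq : {perm 'I_d},
    thermo_sorted g p pip /\ thermo_sorted g q piq /\
    forall x, 0 <= x <= \sum_i g i ->
      thermo_curve g q piq x <= thermo_curve g p pip x.

Definition bath (gam Gam : vec) (b : bool) : vec := if b then gam else Gam.

(* p is the endpoint p^(N-1) of an admissible chain of N-1 strokes,
   starting at gam (b = true) or Gam (b = false), alternating baths. *)
Definition chain_reach (gam Gam : vec) (N : nat) (p : vec) : Prop :=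
  (0 < N)%N /\
  exists (b : bool) (c : nat -> vec),
    c 0%N = bath gam Gam b /\
    (forall k, (k <= N.-1)%N -> prob_vec (c k)) /\
    (forall k, (k < N.-1)%N ->
       thermomaj (bath gam Gam (if odd k then b else ~~ b)) (c k) (c k.+1)) /\
    p = c N.-1.

Definition F_N (gam Gam : vec) (N : nat) (p : vec) : Prop :=
  exists (n : nat) (w : 'I_n -> R) (v : 'I_n -> vec),
    (forall i, 0 <= w i) /\ \sum_i w i = 1 /\
    (forall i, chain_reach gam Gam N (v i)) /\
    p = (fun k => \sum_i w i * v i k).

Definition dist1 (p q : vec) : R := \sum_k `|p k - q k|.

(* F_AB : closure of the union of the F^(N)_AB *)
Definition F_AB (gam Gam : vec) (p : vec) : Prop :=
  forall eps : R, 0 < eps ->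
    exists N q, F_N gam Gam N q /\ dist1 p q < eps.

Definition gibbs (E : vec) (a : R) : vec :=
  fun k => expR (- (a * E k)) / \sum_i expR (- (a * E i)).

End Defs.

Lemma lt_pred_d (d : nat) : (1 < d)%N -> (d.-1 < d)%N.
Proof. by case: d. Qed.

Definition ord_first (d : nat) (hd : (1 < d)%N) : 'I_d := Ordinal (ltnW hd).
Definition ord_last (d : nat) (hd : (1 < d)%N) : 'I_d := Ordinal (lt_pred_d hd).

Section Tilde.
Variables (R : realType) (d : nat) (hd : (1 < d)%N).
Variables (gam Gam : vec R d).

Definition tilde_den : R :=
  Gam (ord_first hd) * (1 - gam (ord_last hd))
  - Gam (ord_last hd) * (1 - gam (ord_first hd)).

Definition tilde_gam : vec R d := fun k =>
  let t1 := Gam (ord_first hd) * (gam (ord_first hd) - gam (ord_last hd)) / tilde_den in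
  if k == ord_first hd then t1
  else (1 - t1) / (1 - gam (ord_first hd)) * gam k.

Definition tilde_Gam : vec R d := fun k =>
  let td := Gam (ord_last hd) * (gam (ord_first hd) - gam (ord_last hd)) / tilde_den in
  if k == ord_last hd then td
  else (1 - td) / (1 - Gam (ord_last hd)) * Gam k.
End Tilde.

(* Main.v *)
Require Import Defs.
From mathcomp Require Import all_boot all_order perm all_algebra.
From mathcomp Require Import reals sequences exp.
From mathcomp Require Import ring lra.
Set Implicit Arguments. Unset Strict Implicit. Unset Printing Implicit Defensive.
Import Order.TTheory GRing.Theory Num.Theory.
Local Open Scope ring_scope.


Section Gen.
Variables (R : realType) (d : nat).
Local Notation vec := (vec R d).

Lemma cl_ge0 (t : R) : 0 <= clamp01 t.
Proof. rewrite /clamp01; case: (leP 0 t) => h; [case: (leP 1 t)|case: (leP 1 0)] => h'; lra. Qed.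
Lemma cl_le1 (t : R) : clamp01 t <= 1.
Proof. rewrite /clamp01; case: (leP 0 t) => h; [case: (leP 1 t)|case: (leP 1 0)] => h'; lra. Qed.
Lemma cl_lt1 (t : R) : clamp01 t < 1 -> t < 1.
Proof. rewrite /clamp01; case: (leP 0 t) => h; [case: (leP 1 t)|case: (leP 1 0)] => h'; lra. Qed.
Lemma cl_gt0 (t : R) : 0 < clamp01 t -> 0 < t.
Proof. rewrite /clamp01; case: (leP 0 t) => h; [case: (leP 1 t)|case: (leP 1 0)] => h'; lra. Qed.
Lemma cl_0 (t : R) : t <= 0 -> clamp01 t = 0.
Proof. move=> h; rewrite /clamp01; case: (leP 0 t) => h1; [case: (leP 1 t)|case: (leP 1 0)] => h'; lra. Qed.
Lemma cl_1 (t : R) : 1 <= t -> clamp01 t = 1.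
Proof. move=> h; rewrite /clamp01; case: (leP 0 t) => h1; [case: (leP 1 t)|case: (leP 1 0)] => h'; lra. Qed.
Lemma cl_id (t : R) : 0 <= t <= 1 -> clamp01 t = t.
Proof. move=> /andP[h2 h]; rewrite /clamp01; case: (leP 0 t) => h1; [case: (leP 1 t)|case: (leP 1 0)] => h'; lra. Qed.
Lemma cl_mul (h y : R) : 0 < h -> h * clamp01 (y / h) = Num.min h (Num.max 0 y).
Proof.
move=> h0.
case: (leP y 0) => hy.
  rewrite cl_0; last by rewrite pmulr_lle0 ?invr_gt0.
  case: (leP 0 y) => hy2; case: (leP h 0) => h3; try lra; case: (leP h y) => h4; lra.
case: (leP h y) => hy2.
  rewrite cl_1; last by rewrite ler_pdivlMr // mul1r.
  case: (leP 0 y) => h5; try lra; case: (leP h y) => h4; rewrite ?mulr1; lra.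
rewrite cl_id; last (apply/andP; split; [by rewrite divr_ge0 // ltW | by rewrite ler_pdivrMr // mul1r ltW]).
rewrite mulrCA divff ?mulr1 ?gt_eqF //.
all: case: (leP 0 y) => h5; try lra; case: (leP h y) => h4; lra.
Qed.

Lemma sum_clamp (F : 'I_d -> R) (x : R) : (forall i, 0 < F i) -> 0 <= x ->
  forall n, (n <= d)%N ->
  \sum_(j < d | (j < n)%N) F j * clamp01 ((x - \sum_(i < d | (i < j)%N) F i) / F j)
  = Num.min x (\sum_(j < d | (j < n)%N) F j).
Proof.
move=> Fp x0; elim=> [|n IH] hn.
  by rewrite !big_pred0 //; case: leP => //; lra.
have hn' : (n < d)%N by [].
set o := Ordinal hn'.
have eqc : forall j : 'I_d, ((j < n.+1)%N && (j != o)) = (j < n)%N.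
  move=> j; rewrite -val_eqE /= ltnS leq_eqVlt; by case: ltngtP.
rewrite (bigD1 o) //= (bigD1 (P := fun j : 'I_d => (j < n.+1)%N) o) //=.
rewrite (eq_bigl _ _ eqc) (eq_bigl (fun j : 'I_d => (j < n)%N) _ eqc).
rewrite IH ?(ltnW hn) // cl_mul //.
set S := \sum_(j < d | (j < n)%N) F j.
idtac.
have := Fp o; move: (F o) => f hf.
case: (leP x S) => h1; case: (leP x (f + S)) => h4;
 (case: (leP 0 (x - S)) => h2; [case: (leP f (x - S)) | case: (leP f 0)] => h3); lra.
Qed.

Lemma curve_mass (F : 'I_d -> R) (x : R) : (forall i, 0 < F i) -> 0 <= x <= \sum_j F j ->
  \sum_(j < d) F j * clamp01 ((x - \sum_(i < d | (i < j)%N) F i) / F j) = x.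
Proof.
move=> Fp /andP[x0 x1].
have E : forall G : 'I_d -> R, \sum_(j < d) G j = \sum_(j < d | (j < d)%N) G j.
  by move=> G; apply: eq_bigl => j; rewrite ltn_ord.
rewrite E sum_clamp // -E; case: leP => //; lra.
Qed.

Lemma sort_perm (r : vec) : exists pi : {perm 'I_d},
  forall i j : 'I_d, (i <= j)%N -> r (pi j) <= r (pi i).
Proof.
set leT := fun a b : 'I_d => r b <= r a.
have tot : total leT by move=> a b; rewrite /leT le_total.
have tr : transitive leT by move=> a b c; rewrite /leT => h1 h2; apply: le_trans h2 h1.
have rf : reflexive leT by move=> a; rewrite /leT.
set s := sort leT (enum 'I_d).
have pe : perm_eq s (ord_tuple d).
  by rewrite /s val_ord_tuple perm_sort.
case/tuple_permP: pe => pi eqs.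
exists pi => i j hij.
have ss : sorted leT s by apply: sort_sorted.
have := sorted_leq_nth tr rf i ss.
move=> /(_ i j); rewrite !inE size_sort size_enum_ord !ltn_ord => /(_ isT isT hij).
rewrite eqs -!tnth_nth !tnth_mktuple !tnth_ord_tuple.
by [].
Qed.


Lemma prefix_sum (F : 'I_d -> R) (k j : 'I_d) : (forall i, 0 <= F i) -> (k < j)%N ->
  \sum_(i < d | (i < k)%N) F i + F k <= \sum_(i < d | (i < j)%N) F i.
Proof.
move=> Fp hkj; rewrite (bigD1 (P := fun i : 'I_d => (i < j)%N) k) //= [X in X <= _]addrC lerD2l.
rewrite big_mkcond [X in _ <= X]big_mkcond; apply: ler_sum => i _.
case: ifP => h1; case: ifP => h2 //.
  move: h2; rewrite -val_eqE /= (ltn_trans h1 hkj) /= => /negbT; by rewrite negbK => /eqP e; move: h1; rewrite e ltnn.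
all: by rewrite ?Fp.
Qed.

Lemma stoch_thermomaj (g p q : vec) (M : 'I_d -> 'I_d -> R) :
  (forall i, 0 < g i) -> (forall i, 0 <= p i) -> (forall i j, 0 <= M i j) ->
  (forall j, \sum_i M i j = 1) -> (forall i, \sum_j M i j * g j = g i) ->
  (forall i, q i = \sum_j M i j * p j) -> thermomaj g p q.
Proof.
move=> gp pp Mp Mc Mg qE.
have [pip sp] := sort_perm (fun k => p k / g k).
have [piq sq] := sort_perm (fun k => q k / g k).
exists pip, piq; split; first by move=> i j /sp. split; first by move=> i j /sq.
move=> x hx.
rewrite /thermo_curve.
set t := fun j : 'I_d => clamp01 ((x - \sum_(i < d | (i < j)%N) g (piq i)) / g (piq j)).
set u := fun j : 'I_d => clamp01 ((x - \sum_(i < d | (i < j)%N) g (pip i)) / g (pip j)).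
change (\sum_(j < d) q (piq j) * t j <= \sum_(j < d) p (pip j) * u j).
have gF : forall (pi : {perm 'I_d}) i, 0 < g (pi i) by move=> pi i; apply: gp.
have sg : forall pi : {perm 'I_d}, \sum_j g (pi j) = \sum_j g j.
  by move=> pi; rewrite [RHS](reindex_inj (@perm_inj _ pi)).
have tm : \sum_j g (piq j) * t j = x.
  apply: (curve_mass (F := fun j => g (piq j))) => //.
  by rewrite sg.
have um : \sum_j g (pip j) * u j = x.
  apply: (curve_mass (F := fun j => g (pip j))) => //.
  by rewrite sg.
set s := fun k => \sum_j t j * M (piq j) k.
have stA : \sum_j q (piq j) * t j = \sum_k s k * p k.
  rewrite /s; under eq_bigr do rewrite qE big_distrl /=.
  rewrite exchange_big; apply: eq_bigr => k _; rewrite big_distrl; apply: eq_bigr => j _ /=; ring.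
have stB : \sum_k s k * g k = x.
  rewrite -tm /s; under eq_bigr do rewrite big_distrl /=.
  rewrite exchange_big; apply: eq_bigr => j _ /=.
  rewrite -Mg mulr_suml; apply: eq_bigr => k _; ring.
have stC : forall k, 0 <= s k <= 1.
  move=> k; apply/andP; split.
    by apply: sumr_ge0 => j _; rewrite mulr_ge0 ?cl_ge0.
  rewrite -(Mc k) (reindex_inj (@perm_inj _ piq)); apply: ler_sum => j _.
  by rewrite ler_piMl ?cl_le1.
set lam := \big[Num.max/0]_(j | u j < 1) (p (pip j) / g (pip j)).
have stD : \sum_k s k * p k <= lam * x + \sum_k g k * Num.max 0 (p k / g k - lam).
  rewrite -stB mulr_sumr -big_split; apply: ler_sum => k _ /=.
  have gk := gp k; have /andP[s0 s1] := stC k.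
  rewrite -{1}(divfK (lt0r_neq0 gk) (p k)).
  move: (p k / g k) => r.
  have m1 : r - lam <= Num.max 0 (r - lam) by rewrite le_max lexx orbT.
  have m0 : 0 <= Num.max 0 (r - lam) by rewrite le_max lexx.
  move: (Num.max 0 (r - lam)) m1 m0 => m m1 m0.
  have h1 : 0 <= s k * g k * (m - (r - lam)) by rewrite !mulr_ge0 ?subr_ge0 // ltW.
  have h2 : 0 <= (1 - s k) * (g k * m) by rewrite !mulr_ge0 ?subr_ge0 // ltW.
  nra.
have ord_uk : forall j k, u k < 1 -> 0 < u j -> (j <= k)%N.
  move=> j k hk hj; rewrite leqNgt; apply/negP => hkj.
  have := prefix_sum (F := fun i => g (pip i)) (fun i => ltW (gF pip i)) hkj.
  have := cl_lt1 hk; rewrite ltr_pdivrMr // mul1r.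
  have := cl_gt0 hj; rewrite ltr_pdivlMr ?gF // mul0r subr_gt0.
  lra.
have stF : forall j, u j * (p (pip j) / g (pip j) - lam) = Num.max 0 (p (pip j) / g (pip j) - lam).
  move=> j; set r := p (pip j) / g (pip j).
  have u0 := cl_ge0 ((x - \sum_(i < d | (i < j)%N) g (pip i)) / g (pip j)).
  have u1 := cl_le1 ((x - \sum_(i < d | (i < j)%N) g (pip i)) / g (pip j)).
  rewrite -/(u j) in u0 u1.
  case: (leP lam r) => h.
    case: (ltP (u j) 1) => hu.
      have : r <= lam by apply: (@le_bigmax_cond _ _ _ 0 j (fun j => u j < 1) (fun j => p (pip j) / g (pip j))).
      move=> h2; have -> : r - lam = 0 by lra.
      by rewrite mulr0; case: (leP 0 0).
    have -> : u j = 1 by lra.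
    by rewrite mul1r; case: (leP 0 (r - lam)) => //; lra.
  have -> : u j = 0.
    case: (leP (u j) 0) => hu; first lra.
    have : lam <= r.
      apply/bigmax_leP; split.
        by rewrite /r divr_ge0 // ltW.
      move=> k hk; apply: sp; exact: ord_uk.
    lra.
  by rewrite mul0r; case: (leP 0 (r - lam)) => //; lra.
have stE : \sum_j p (pip j) * u j = lam * x + \sum_k g k * Num.max 0 (p k / g k - lam).
  rewrite [X in _ = _ + X](reindex_inj (@perm_inj _ pip)) -um mulr_sumr -big_split; apply: eq_bigr => j _ /=.
  rewrite -stF.
  rewrite -{1}(divfK (lt0r_neq0 (gF pip j)) (p (pip j))).
  ring.
by rewrite stA stE.
Qed.

End Gen.


Section Gen2.
Variables (R : realType) (d : nat).
Local Notation vec := (vec R d).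

Definition frm (w : vec) (b : 'I_d) (t : R) : vec :=
  fun i => if i == b then t else (1 - t) / (1 - w b) * w i.
Definition Tm (w : vec) (a b : 'I_d) (u v : R) (p : vec) : vec :=
  frm w b (u * p a + v * (1 - p a)).

Lemma sum_ifl (a : 'I_d) (A B : R) (h : vec) :
  \sum_j (if j == a then A else B) * h j = A * h a + B * (\sum_j h j - h a).
Proof.
rewrite (bigD1 a) //= eqxx (bigD1 a (F := h)) //= addrAC subrr add0r mulr_sumr.
congr (_ + _); apply: eq_bigr => j /negbTE ->; by [].
Qed.

Lemma sum_ifr (b : 'I_d) (A C : R) (h : vec) :
  \sum_i (if i == b then A else C * h i) = A + C * (\sum_j h j - h b).
Proof.
rewrite (bigD1 b) //= eqxx (bigD1 b (F := h)) //= addrAC subrr add0r mulr_sumr.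
congr (_ + _); apply: eq_bigr => j /negbTE ->; by [].
Qed.

Lemma le_sum1 (p : vec) a : prob_vec p -> p a <= 1.
Proof.
case=> p0 p1; rewrite -p1 (bigD1 a) //= lerDl; apply: sumr_ge0 => i _; exact: p0.
Qed.

Lemma Tm_ok (w : vec) (a b : 'I_d) (u v : R) (p : vec) :
  prob_vec w -> (forall i, 0 < w i) -> w b < 1 -> 0 <= u <= 1 -> 0 <= v <= 1 ->
  u * w a + v * (1 - w a) = w b -> prob_vec p ->
  thermomaj w p (Tm w a b u v p) /\ prob_vec (Tm w a b u v p).
Proof.
move=> [w0 w1] wp wb /andP[u0 u1] /andP[v0 v1] hw [p0 p1].
set M := fun i j : 'I_d => if j == a then (if i == b then u else (1 - u) / (1 - w b) * w i)
                           else (if i == b then v else (1 - v) / (1 - w b) * w i).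
have cb : 0 < 1 - w b by rewrite subr_gt0.
have Mp : forall i j, 0 <= M i j.
  move=> i j; rewrite /M; case: ifP => _; case: ifP => _ //;
  by rewrite mulr_ge0 ?divr_ge0 ?subr_ge0 // ltW.
have Mc : forall j, \sum_i M i j = 1.
  move=> j; rewrite /M; case: (j == a); rewrite sum_ifr w1;
  by rewrite divfK ?lt0r_neq0 // subrKC.
have Mg : forall i, \sum_j M i j * w j = w i.
  move=> i; rewrite /M.
  have -> : \sum_j (if j == a then (if i == b then u else (1 - u) / (1 - w b) * w i)
                           else (if i == b then v else (1 - v) / (1 - w b) * w i)) * w j
     = \sum_j (if j == a then (if i == b then u else (1 - u) / (1 - w b) * w i)
                           else (if i == b then v else (1 - v) / (1 - w b) * w i)) * w j by [].
  rewrite sum_ifl w1; case: eqP => [->|_]; first by rewrite hw.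
  have -> : (1 - u) / (1 - w b) * w i * w a + (1 - v) / (1 - w b) * w i * (1 - w a)
           = (u * w a + v * (1 - w a) - 1) / (1 - w b) * - w i by ring.
  rewrite hw -opprB mulNr divff ?lt0r_neq0 //; ring.
have qE : forall i, Tm w a b u v p i = \sum_j M i j * p j.
  move=> i; rewrite /M sum_ifl p1 /Tm /frm; case: eqP => _ //.
  ring.
have pq : prob_vec (Tm w a b u v p).
  split.
    move=> i; rewrite qE; apply: sumr_ge0 => j _; rewrite mulr_ge0 //.
  under eq_bigr do rewrite qE.
  rewrite exchange_big -p1; apply: eq_bigr => j _; by rewrite -mulr_suml Mc mul1r.
split=> //; exact: stoch_thermomaj wp p0 Mp Mc Mg qE.
Qed.


Lemma form_dist (w : vec) (j : 'I_d) (t t' : R) :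
  (forall k, 0 <= w k <= 1) -> w j < 1 ->
  dist1 (frm w j t) (frm w j t') <= d%:R * (`|t - t'| / (1 - w j)).
Proof.
move=> w01 wj; have cb : 0 < 1 - w j by rewrite subr_gt0.
have -> : d%:R * (`|t - t'| / (1 - w j)) = \sum_(k < d) (`|t - t'| / (1 - w j)).
  by rewrite sumr_const card_ord mulr_natl.
rewrite /dist1; apply: ler_sum => k _.
rewrite /frm; case: eqP => _.
  rewrite ler_pdivlMr // ler_piMr //; have := w01 j; case/andP => ? ?; lra.
have -> : (1 - t) / (1 - w j) * w k - (1 - t') / (1 - w j) * w k = (t' - t) * (w k / (1 - w j)) by ring.
rewrite normrM distrC (ger0_norm (divr_ge0 _ (ltW cb))); last by case/andP: (w01 k).
apply: ler_wpM2l => //; rewrite ler_pdivrMr // mulVf ?lt0r_neq0 //.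
by case/andP: (w01 k).
Qed.
End Gen2.


Section Gen3.
Variables (R : realType) (d : nat).
Local Notation vec := (vec R d).

Lemma conv (sq : nat -> vec) (w : vec) (j : 'I_d) (F : R -> R) (xs rho : R) :
  0 <= rho -> (forall y, F y - xs = rho * (y - xs)) ->
  (forall m k, sq m.+1 k = frm w j (F (sq m j)) k) ->
  (forall k, sq 0%N k = frm w j (sq 0%N j) k) ->
  (forall k, 0 <= w k <= 1) -> w j < 1 ->
  forall m, dist1 (sq m) (frm w j xs) <= d%:R * (rho ^+ m * `|sq 0%N j - xs| / (1 - w j)).
Proof.
move=> r0 hF hrec h0 w01 wj.
have par : forall m, sq m.+1 j = F (sq m j) by move=> m; rewrite hrec /frm eqxx.
have err : forall m, `|sq m j - xs| = rho ^+ m * `|sq 0%N j - xs|.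
  elim=> [|m IH]; first by rewrite expr0 mul1r.
  by rewrite par hF normrM IH exprS (ger0_norm r0) mulrA.
have fm : forall m k, sq m k = frm w j (sq m j) k.
  case=> [|m] k; [exact: h0 | by rewrite hrec par].
move=> m; rewrite -err.
have -> : dist1 (sq m) (frm w j xs) = dist1 (frm w j (sq m j)) (frm w j xs).
  by apply: eq_bigr => k _; rewrite -fm.
exact: form_dist.
Qed.

Lemma pow_bound (rho : R) m N : 0 <= rho < 1 -> (N <= m.*2 + 2)%N ->
  rho ^+ m <= ((1 + rho) / 2) ^+ N / ((1 + rho) / 2) ^+ 2.
Proof.
move=> /andP[r0 r1] hN; set r := (1 + rho) / 2.
have rp : 0 < r by rewrite /r; lra.
have r1' : r <= 1 by rewrite /r; lra.
have rr : rho <= r ^+ 2.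
  have e : rho = 2 * r - 1 by rewrite /r mulrC divfK ?pnatr_eq0 //; lra.
  have := sqr_ge0 (r - 1); rewrite !expr2 e => h; lra.
rewrite ler_pdivlMr ?exprn_gt0 //.
apply: (le_trans _ (ler_wiXn2l (ltW rp) r1' hN)).
rewrite exprD; apply: ler_wpM2r; first by rewrite exprn_ge0 // ltW.
rewrite -mul2n exprM; apply: lerXn2r. all: try by []. all: rewrite ?qualifE /= ?exprn_ge0 // ?ltW //.
Qed.

Lemma bern (h : R) n : 0 <= h -> 1 + n%:R * h <= (1 + h) ^+ n.
Proof.
move=> h0; elim: n => [|n IH]; first by rewrite mul0r addr0 expr0.
rewrite exprSr -natr1.
have h1 : 0 <= 1 + h by lra.
have := ler_wpM2r h1 IH.
have : 0 <= n%:R * h * h by rewrite !mulr_ge0.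
move=> a b; apply: le_trans b; rewrite mulrDl mul1r mulrDr mulr1 mulrDl mul1r. lra.
Qed.

Lemma small_pow (C r eps : R) : 0 < r < 1 -> 0 < eps ->
  exists N, (0 < N)%N /\ C * r ^+ N < eps.
Proof.
move=> /andP[r0 r1] e0.
set h := (1 - r) / r.
have h0 : 0 < h by rewrite /h divr_gt0 // subr_gt0.
have rh : r * (1 + h) = 1.
  rewrite /h mulrDr mulr1 mulrCA divff ?mulr1 ?lt0r_neq0 //; lra.
set X := `|C| / (h * eps).
have X0 : 0 <= X by rewrite /X divr_ge0 // mulr_ge0 // ltW.
have := archi_boundP X0; set n := Num.Def.archi_bound X => hn.
exists n.+1; split => //.
have pN : 0 < (1 + h) ^+ n.+1 by rewrite exprn_gt0 // ltr_wpDr // ltW.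
have eqr : r ^+ n.+1 = ((1 + h) ^+ n.+1)^-1.
  apply: (mulIf (lt0r_neq0 pN)); rewrite mulVf ?lt0r_neq0 // -exprMn rh expr1n //.
rewrite eqr.
apply: (le_lt_trans (ler_norm _)); rewrite normrM normfV (gtr0_norm pN).
rewrite ltr_pdivrMr //.
have b := bern n.+1 (ltW h0).
have hX : X < n.+1%:R by rewrite -natr1; lra.
move: hX; rewrite /X ltr_pdivrMr; last by rewrite mulr_gt0.
move=> hX.
have : eps * (1 + n.+1%:R * h) <= eps * (1 + h) ^+ n.+1 by apply: ler_wpM2l => //; exact: ltW.
lra.
Qed.

End Gen3.


Lemma first_neq_last d (hd : (1 < d)%N) : ord_first hd != ord_last hd.
Proof. rewrite -val_eqE /=; by case: d hd => [|[|n]]. Qed.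

Fixpoint chn (R : realType) d (gam Gam : vec R d) (Tg TG : vec R d -> vec R d) (b : bool) (k : nat) : vec R d :=
  match k with
  | 0%N => bath gam Gam b
  | k'.+1 => (if (if odd k' then b else ~~ b) then Tg else TG) (chn gam Gam Tg TG b k')
  end.

Section Chain.
Variables (R : realType) (d : nat) (hd : (1 < d)%N) (gam Gam : vec R d).
Local Notation vec := (vec R d).
Local Notation f1 := (ord_first hd).
Local Notation fl := (ord_last hd).
Hypotheses (pg : prob_vec gam) (pG : prob_vec Gam) (gp : forall i, 0 < gam i)
  (Gp : forall i, 0 < Gam i) (hg : gam fl < gam f1) (hG : Gam fl <= Gam f1).

Lemma two_le (w : vec) a b : prob_vec w -> a != b -> w a + w b <= 1.
Proof.
case=> w0 w1 hab; rewrite -w1 (bigD1 a) //= (bigD1 b) /=; last by rewrite eq_sym.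
by rewrite addrA lerDl; apply: sumr_ge0 => i _; exact: w0.
Qed.

Lemma lt1 (w : vec) a b : prob_vec w -> (forall i, 0 < w i) -> a != b -> w a < 1.
Proof. move=> pw wp hab; have := two_le pw hab; have := wp b; lra. Qed.

Lemma w01 (w : vec) : prob_vec w -> forall k, 0 <= w k <= 1.
Proof. move=> pw k; apply/andP; split; [by case: pw | exact: le_sum1]. Qed.

Definition c0 := (gam f1 - gam fl) / (1 - gam fl).
Definition sG := Gam fl / Gam f1.
Definition Tg := Tm gam fl f1 1 c0.
Definition TG := Tm Gam f1 fl sG 0.
Definition rho := sG * (1 - c0).

Lemma g1lt : gam f1 < 1. Proof. exact: lt1 pg gp (first_neq_last hd). Qed.
Lemma gdlt : gam fl < 1. Proof. by apply: (lt1 (b := f1)) => //; rewrite eq_sym first_neq_last. Qed.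
Lemma Gdlt : Gam fl < 1. Proof. by apply: (lt1 (b := f1)) => //; rewrite eq_sym first_neq_last. Qed.

Lemma c0_01 : 0 <= c0 <= 1.
Proof.
have h := gdlt; have h1 := g1lt.
rewrite /c0; apply/andP; split.
  by rewrite divr_ge0 // subr_ge0 ltW.
by rewrite ler_pdivrMr ?subr_gt0 // mul1r lerD2r ltW.
Qed.

Lemma sG_01 : 0 <= sG <= 1.
Proof.
rewrite /sG; apply/andP; split; first by rewrite divr_ge0 // ltW.
by rewrite ler_pdivrMr // mul1r.
Qed.

Lemma Tg_ok p : prob_vec p -> thermomaj gam p (Tg p) /\ prob_vec (Tg p).
Proof.
move=> pp; apply: Tm_ok => //.
- exact: g1lt.
- by rewrite ler01 lexx.
- exact: c0_01.
- rewrite /c0 mul1r divfK; first by ring.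
  by rewrite lt0r_neq0 // subr_gt0 gdlt.
Qed.

Lemma TG_ok p : prob_vec p -> thermomaj Gam p (TG p) /\ prob_vec (TG p).
Proof.
move=> pp; apply: Tm_ok => //.
- exact: Gdlt.
- exact: sG_01.
- by rewrite lexx ler01.
- by rewrite /sG mul0r addr0 divfK // lt0r_neq0.
Qed.

Lemma chn_prob b k : prob_vec (chn gam Gam Tg TG b k).
Proof.
elim: k => [|k IH] /=; first by case: b.
by case: (if odd k then b else ~~ b); [case: (Tg_ok IH)|case: (TG_ok IH)].
Qed.

Lemma chain_ok b N : (0 < N)%N -> chain_reach gam Gam N (chn gam Gam Tg TG b N.-1).
Proof.
move=> N0; split=> //; exists b, (chn gam Gam Tg TG b); split=> //; split.
  by move=> k _; exact: chn_prob.
split=> // k _ /=.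
case: (if odd k then b else ~~ b) => /=; [case: (Tg_ok (chn_prob b k))|case: (TG_ok (chn_prob b k))] => //.
Qed.

End Chain.


Lemma frm_b (R : realType) d (w : vec R d) b t : frm w b t b = t.
Proof. by rewrite /frm eqxx. Qed.

Lemma FN_one (R : realType) d (gam Gam p : vec R d) N :
  chain_reach gam Gam N p -> F_N gam Gam N (fun k => \sum_(i < 1) 1 * p k).
Proof.
move=> h; exists 1%N, (fun _ => 1), (fun _ => p); split; first by move=> _; exact: ler01.
by split; [rewrite big_ord1 | split].
Qed.

Lemma dist1C (R : realType) d (p q : vec R d) : dist1 p q = dist1 q p.
Proof. by apply: eq_bigr => k _; rewrite distrC. Qed.

Section Fin.
Variables (R : realType) (d : nat) (hd : (1 < d)%N) (gam Gam : vec R d).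
Local Notation vec := (vec R d).
Local Notation f1 := (ord_first hd).
Local Notation fl := (ord_last hd).
Hypotheses (pg : prob_vec gam) (pG : prob_vec Gam) (gp : forall i, 0 < gam i)
  (Gp : forall i, 0 < Gam i) (hg : gam fl < gam f1) (hG : Gam fl <= Gam f1).

Local Notation chn' := (chn gam Gam (Tg hd gam) (TG hd Gam)).
Local Notation rh := (rho hd gam Gam).

Lemma rho_01 : 0 <= rh < 1.
Proof.
have /andP[s0 s1] : 0 <= sG hd Gam <= 1 by apply: sG_01.
have gd1 : gam fl < 1 by apply: gdlt.
have c0p : 0 < c0 hd gam by rewrite /c0 divr_gt0 // subr_gt0.
have /andP[_ c1] : 0 <= c0 hd gam <= 1 by apply: c0_01.
rewrite /rho; apply/andP; split; first by rewrite mulr_ge0 // subr_ge0.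
apply: (le_lt_trans (ler_piMl _ s1)); [rewrite subr_ge0 // | lra].
Qed.

Lemma final (w : vec) (j : 'I_d) (xs : R) (F : R -> R) (tgt : vec) (bA : bool) :
  prob_vec w -> w j < 1 ->
  (forall k, tgt k = frm w j xs k) ->
  (forall y, F y - xs = rh * (y - xs)) ->
  (forall m k, chn' bA ((m.+1).*2) k = frm w j (F (chn' bA (m.*2) j)) k) ->
  (forall k, chn' bA 0 k = frm w j (chn' bA 0 j) k) ->
  (forall m k, chn' (~~bA) ((m.+1).*2.+1) k = frm w j (F (chn' (~~bA) (m.*2.+1) j)) k) ->
  (forall k, chn' (~~bA) 1 k = frm w j (chn' (~~bA) 1 j) k) ->
  exists C r : R, 0 < r < 1 /\ forall N, (0 < N)%N ->
    exists p, F_N gam Gam N p /\ dist1 p tgt <= C * r ^+ N.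
Proof.
move=> pw wj htg hF recA iniA recB iniB.
have /andP[r0 r1] := rho_01.
set r := (1 + rh) / 2.
set eA := `|chn' bA 0 j - xs|; set eB := `|chn' (~~bA) 1 j - xs|.
have cb : 0 < 1 - w j by rewrite subr_gt0.
have rp : 0 < r by rewrite /r; lra.
exists (d%:R * ((eA + eB) / (1 - w j)) / r ^+ 2), r; split.
  by apply/andP; split; rewrite /r; lra.
move=> N N0.
set m := (N.-1)./2.
have hN := odd_double_half N.-1.
have fin : forall e, 0 <= e -> e <= eA + eB -> (N <= m.*2 + 2)%N ->
    d%:R * (rh ^+ m * e / (1 - w j)) <= d%:R * ((eA + eB) / (1 - w j)) / r ^+ 2 * r ^+ N.
  move=> e e0 e1 hNm.
  have pb := pow_bound (rho := rh) (m := m) (N := N) (introT andP (conj r0 r1)) hNm.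
  apply: (@le_trans _ _ (d%:R * (r ^+ N / r ^+ 2 * ((eA + eB) / (1 - w j))))); last first.
    by rewrite le_eqVlt; apply/orP; left; apply/eqP; ring.
  apply: ler_wpM2l; first exact: ler0n.
  rewrite -mulrA; apply: ler_pM => //.
  - by rewrite exprn_ge0.
  - by rewrite divr_ge0 // ltW.
  - by apply: ler_wpM2r => //; rewrite invr_ge0 ltW.
have w01' := w01 pw.
case hb: (odd N.-1); move: hN; rewrite hb /= => hN.
- exists (fun k => \sum_(i < 1) 1 * chn' (~~bA) N.-1 k); split.
    by apply: FN_one; apply: (chain_ok pg pG gp Gp hg hG).
  have -> : dist1 (fun k => \sum_(i < 1) 1 * chn' (~~bA) N.-1 k) tgt
           = dist1 (chn' (~~bA) (m.*2.+1)) (frm w j xs).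
    by apply: eq_bigr => k _; rewrite big_ord1 mul1r htg -hN add1n.
  apply: le_trans (conv (sq := fun m => chn' (~~bA) (m.*2.+1)) (rho := rh) r0 hF recB iniB w01' wj m) _.
  apply: fin; first exact: normr_ge0.
    by rewrite /eB lerDr normr_ge0.
  by rewrite -(prednK N0) -hN add1n addn2.
- exists (fun k => \sum_(i < 1) 1 * chn' bA N.-1 k); split.
    by apply: FN_one; apply: (chain_ok pg pG gp Gp hg hG).
  have -> : dist1 (fun k => \sum_(i < 1) 1 * chn' bA N.-1 k) tgt
           = dist1 (chn' bA (m.*2)) (frm w j xs).
    by apply: eq_bigr => k _; rewrite big_ord1 mul1r htg -hN add0n.
  apply: le_trans (conv (sq := fun m => chn' bA (m.*2)) (rho := rh) r0 hF recA iniA w01' wj m) _.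
  apply: fin; first exact: normr_ge0.
    by rewrite /eA lerDl normr_ge0.
  by rewrite -(prednK N0) -hN add0n addn2; apply: leqnSn.
Qed.

End Fin.


Section Gibbs.
Variables (R : realType) (d : nat) (hd : (1 < d)%N) (E : 'I_d -> R).

Lemma Z_gt0 (a : R) : 0 < \sum_i expR (- (a * E i)).
Proof.
rewrite (bigD1 (ord_first hd)) //=.
have h1 := expR_gt0 (- (a * E (ord_first hd))).
have h2 : 0 <= \sum_(i < d | i != ord_first hd) expR (- (a * E i)).
  by apply: sumr_ge0 => i _; exact: expR_ge0.
lra.
Qed.

Lemma gibbs_pos a k : 0 < gibbs E a k.
Proof. by rewrite /gibbs divr_gt0 ?expR_gt0 ?Z_gt0. Qed.

Lemma gibbs_prob a : prob_vec (gibbs E a).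
Proof.
split; first by move=> i; apply: ltW; apply: gibbs_pos.
by rewrite /gibbs -mulr_suml divff // lt0r_neq0 // Z_gt0.
Qed.

Lemma gibbs_le a i j : 0 <= a -> E i <= E j -> gibbs E a j <= gibbs E a i.
Proof.
move=> a0 hij; rewrite /gibbs ler_pM2r ?invr_gt0 ?Z_gt0 // ler_expR lerN2.
exact: ler_wpM2l.
Qed.

Lemma gibbs_lt a i j : 0 < a -> E i < E j -> gibbs E a j < gibbs E a i.
Proof.
move=> a0 hij; rewrite /gibbs ltr_pM2r ?invr_gt0 ?Z_gt0 // ltr_expR ltrN2.
by rewrite ltr_pM2l.
Qed.
End Gibbs.

Section Inst.
Variables (R : realType) (d : nat) (hd : (1 < d)%N) (gam Gam : vec R d).
Local Notation f1 := (ord_first hd).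
Local Notation fl := (ord_last hd).
Hypotheses (pg : prob_vec gam) (pG : prob_vec Gam) (gp : forall i, 0 < gam i)
  (Gp : forall i, 0 < Gam i) (hg : gam fl < gam f1) (hG : Gam fl <= Gam f1).
Local Notation chn' := (chn gam Gam (Tg hd gam) (TG hd Gam)).

Lemma den_pos : 0 < tilde_den hd gam Gam.
Proof.
rewrite /tilde_den subr_gt0.
have gd1 : gam fl < 1 by apply: gdlt.
apply: (@lt_le_trans _ _ (Gam fl * (1 - gam fl))).
  by rewrite ltr_pM2l // ltrD2l ltrN2.
by apply: ler_wpM2r => //; rewrite subr_ge0 ltW.
Qed.

Definition xg := Gam f1 * (gam f1 - gam fl) / tilde_den hd gam Gam.
Definition xG := Gam fl * (gam f1 - gam fl) / tilde_den hd gam Gam.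
Definition Fg (y : R) := 1 * (sG hd Gam * y + 0 * (1 - y)) + c0 hd gam * (1 - (sG hd Gam * y + 0 * (1 - y))).
Definition FG (y : R) := sG hd Gam * (1 * y + c0 hd gam * (1 - y)) + 0 * (1 - (1 * y + c0 hd gam * (1 - y))).

Lemma Fg_fix y : Fg y - xg = rho hd gam Gam * (y - xg).
Proof.
have dn := den_pos; have gd1 : gam fl < 1 by apply: gdlt.
have G1 := Gp f1.
rewrite /Fg /xg /rho /c0 /sG; move: dn; rewrite /tilde_den => dn.
field.
by rewrite !lt0r_neq0 // subr_gt0.
Qed.

Lemma FG_fix y : FG y - xG = rho hd gam Gam * (y - xG).
Proof.
have dn := den_pos; have gd1 : gam fl < 1 by apply: gdlt.
have G1 := Gp f1.
rewrite /FG /xG /rho /c0 /sG; move: dn; rewrite /tilde_den => dn.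
field.
by rewrite !lt0r_neq0 // subr_gt0.
Qed.

End Inst.


Lemma FAB_of (R : realType) d (gam Gam t : vec R d) :
  (exists C r : R, 0 < r < 1 /\ forall N, (0 < N)%N ->
    exists p, F_N gam Gam N p /\ dist1 p t <= C * r ^+ N) -> F_AB gam Gam t.
Proof.
move=> [C [r [hr H]]] eps e0.
have [N [N0 hN]] := small_pow C hr e0.
have [p [hp hdist]] := H N N0.
exists N, p; split => //; rewrite dist1C; exact: le_lt_trans hdist hN.
Qed.

Section Inst2.
Variables (R : realType) (d : nat) (hd : (1 < d)%N) (gam Gam : vec R d).
Local Notation f1 := (ord_first hd).
Local Notation fl := (ord_last hd).
Hypotheses (pg : prob_vec gam) (pG : prob_vec Gam) (gp : forall i, 0 < gam i)
  (Gp : forall i, 0 < Gam i) (hg : gam fl < gam f1) (hG : Gam fl <= Gam f1).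
Local Notation chn' := (chn gam Gam (Tg hd gam) (TG hd Gam)).

Lemma Tg_eq x k : Tg hd gam x k = frm gam f1 (1 * x fl + c0 hd gam * (1 - x fl)) k.
Proof. by []. Qed.
Lemma TG_eq x k : TG hd Gam x k = frm Gam fl (sG hd Gam * x f1 + 0 * (1 - x f1)) k.
Proof. by []. Qed.

Lemma main_inst :
  let tg := tilde_gam hd gam Gam in
  let tG := tilde_Gam hd gam Gam in
  F_AB gam Gam tg /\ F_AB gam Gam tG /\
  (exists (C r : R), 0 <= r < 1 /\
     forall N : nat, (0 < N)%N ->
       exists p, F_N gam Gam N p /\ dist1 p tg <= C * r ^+ N) /\
  (exists (C r : R), 0 <= r < 1 /\
     forall N : nat, (0 < N)%N ->
       exists p, F_N gam Gam N p /\ dist1 p tG <= C * r ^+ N).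
Proof.
move=> tg tG.
have g1 : gam f1 < 1 by apply: g1lt.
have G1 : Gam fl < 1 by apply: Gdlt.
have HA := @final R d hd gam Gam pg pG gp Gp hg hG gam f1 (xg hd gam Gam) (Fg hd gam Gam) tg true pg g1
  (fun k => erefl) (Fg_fix pg gp Gp hg hG).
have HB := @final R d hd gam Gam pg pG gp Gp hg hG Gam fl (xG hd gam Gam) (FG hd gam Gam) tG false pG G1
  (fun k => erefl) (FG_fix pg gp Gp hg hG).
have [C1 [r1 [hr1 H1]]] : exists C r : R, 0 < r < 1 /\ forall N, (0 < N)%N ->
    exists p, F_N gam Gam N p /\ dist1 p tg <= C * r ^+ N.
  apply: HA.
  - move=> m k.
    have -> : chn' true (m.+1).*2 = Tg hd gam (TG hd Gam (chn' true (m.*2))).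
      by rewrite doubleS /= odd_double /=.
    by rewrite Tg_eq TG_eq frm_b.
  - move=> k; rewrite /= /frm; case: eqP => [->|_] //.
    by rewrite divff ?mul1r // lt0r_neq0 // subr_gt0.
  - move=> m k.
    have -> : chn' false (m.+1).*2.+1 = Tg hd gam (TG hd Gam (chn' false (m.*2.+1))).
      by rewrite doubleS /= odd_double /=.
    by rewrite Tg_eq TG_eq frm_b.
  - move=> k.
    have -> : chn' false 1 = Tg hd gam Gam by [].
    by rewrite !Tg_eq frm_b.
have [C2 [r2 [hr2 H2]]] : exists C r : R, 0 < r < 1 /\ forall N, (0 < N)%N ->
    exists p, F_N gam Gam N p /\ dist1 p tG <= C * r ^+ N.
  apply: HB.
  - move=> m k.
    have -> : chn' false (m.+1).*2 = TG hd Gam (Tg hd gam (chn' false (m.*2))).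
      by rewrite doubleS /= odd_double /=.
    by rewrite TG_eq Tg_eq frm_b.
  - move=> k; rewrite /= /frm; case: eqP => [->|_] //.
    by rewrite divff ?mul1r // lt0r_neq0 // subr_gt0.
  - move=> m k.
    have -> : chn' true (m.+1).*2.+1 = TG hd Gam (Tg hd gam (chn' true (m.*2.+1))).
      by rewrite doubleS /= odd_double /=.
    by rewrite TG_eq Tg_eq frm_b.
  - move=> k.
    have -> : chn' true 1 = TG hd Gam gam by [].
    by rewrite !TG_eq frm_b.
split; first by apply: FAB_of; exists C1, r1.
split; first by apply: FAB_of; exists C2, r2.
split.
  exists C1, r1; split => //; case/andP: hr1 => a b; apply/andP; split => //; exact: ltW.
exists C2, r2; split => //; case/andP: hr2 => a b; apply/andP; split => //; exact: ltW.
Qed.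
End Inst2.

Theorem proposition4 (R : realType) (d : nat) (hd : (1 < d)%N)
  (E : 'I_d -> R)
  (hE : forall i j : 'I_d, (i <= j)%N -> E i <= E j)
  (hE1d : E (ord_first hd) < E (ord_last hd))
  (alpha beta : R) (hbeta : 0 <= beta) (hab : beta < alpha) :
  let gam := gibbs E alpha in
  let Gam := gibbs E beta in
  let tg := tilde_gam hd gam Gam in
  let tG := tilde_Gam hd gam Gam in
  F_AB gam Gam tg /\ F_AB gam Gam tG /\
  (exists (C r : R), 0 <= r < 1 /\
     forall N : nat, (0 < N)%N ->
       exists p, F_N gam Gam N p /\ dist1 p tg <= C * r ^+ N) /\
  (exists (C r : R), 0 <= r < 1 /\
     forall N : nat, (0 < N)%N ->
       exists p, F_N gam Gam N p /\ dist1 p tG <= C * r ^+ N).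
Proof.
move=> gam Gam tg tG.
apply: main_inst.
- exact: gibbs_prob.
- exact: gibbs_prob.
- by move=> i; apply: gibbs_pos.
- by move=> i; apply: gibbs_pos.
- by apply: gibbs_lt => //; lra.
- by apply: gibbs_le => //; lra.
Qed.
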